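(* Let $A\in\mathbb{R}^{m\times n}$ with $m\le n$, let $\lambda>0$, and let $D=\begin{bmatrix}A&\sqrt{\lambda}I_m\end{bmatrix}$ have economy SVD $D=U_D\Sigma_D\begin{bmatrix}V_1^T&V_2^T\end{bmatrix}$, where $V_1\in\mathbb{R}^{n\times m}$ consists of the first $n$ rows of the matrix of right singular vectors. Let $X\in\mathbb{R}^{n\times s}$ and suppose that for some $0<\epsilon<1$, $$\|V_1^TXX^TV_1-V_1^TV_1\|_2\le\epsilon .$$ Let $R\in\mathbb{R}^{m\times m}$ be any matrix with $R^TR=(AX)(AX)^T+\lambda I_m$. Then $$\kappa_2(R^{-T}D)\le\sqrt{\frac{1+\epsilon}{1-\epsilon}}.$$
   Context: $\|\cdot\|_2$ is the spectral norm; $\kappa_2(M)$ for the full-row-rank $m\times(n+m)$ matrix $M$ is the ratio of its largest to smallest of its $m$ singular values. $R$ is invertible since $R^TR$ is positive definite. *)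

(* Defs.v *)
From HB Require Import structures.
From mathcomp Require Import all_boot all_order all_algebra.
From mathcomp Require Import classical_sets reals.
Set Implicit Arguments. Unset Strict Implicit. Unset Printing Implicit Defensive.
Import Order.TTheory GRing.Theory Num.Theory.
Local Open Scope ring_scope.
Local Open Scope classical_set_scope.

(* Singular values of M : 'M_(p,q) taken as the square roots of the
   eigenvalues of M M^T (for p <= q and full row rank these are exactly the
   p singular values of M). *)
Definition singvals {R : realType} {p q : nat} (M : 'M[R]_(p, q)) : set R :=
  [set Num.sqrt a | a in [set a | eigenvalue (M *m M^T) a]].

Definition sigma_max {R : realType} {p q : nat} (M : 'M[R]_(p, q)) : R :=
  sup (singvals M).

Definition sigma_min {R : realType} {p q : nat} (M : 'M[R]_(p, q)) : R :=
  inf (singvals M).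

Definition spec_norm {R : realType} {p q : nat} (M : 'M[R]_(p, q)) : R :=
  sigma_max M.

Definition kappa2 {R : realType} {p q : nat} (M : 'M[R]_(p, q)) : R :=
  sigma_max M / sigma_min M.

(* Main.v *)
Require Import Defs.
From mathcomp Require Import all_boot all_order all_algebra.
From mathcomp Require Import classical_sets reals boolp polyrcf.
From mathcomp Require Import lra.
Import Order.TTheory GRing.Theory Num.Theory.
Local Open Scope ring_scope.
Local Open Scope classical_set_scope.

Lemma singvals_ub {R : realType} {p q} (M : 'M[R]_(p, q)) : has_ubound (singvals M).
Proof.
exists (Num.sqrt (cauchy_bound (char_poly (M *m M^T)))).
move=> _ [a Ha <-]; apply: ler_wsqrtr.
move: Ha; rewrite /= eigenvalue_root_char => /eqP Ha.
have := cauchy_boundP (monic_neq0 (char_poly_monic _)) Ha.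
by move/ltW; apply: le_trans; apply: ler_norm.
Qed.

Lemma eig_bound {R : realType} {m} {E : 'M[R]_m} {eps} {w : 'rV_m} {b} :
  E^T = E -> sup (singvals E) <= eps -> w != 0 -> w *m E = b *: w ->
  `|b| <= eps.
Proof.
move=> ET hs w0 hw; apply: le_trans hs.
suff H : singvals E `|b| by exact: (ub_le_sup (singvals_ub E) H).
exists (b ^+ 2); last by rewrite sqrtr_sqr.
rewrite /=; apply/eigenvalueP; exists w => //.
by rewrite ET mulmxA hw -scalemxAl hw scalerA expr2.
Qed.

Lemma sigma_unit {R : realType} m (S : 'M[R]_m) :
  (forall i j : 'I_m, i != j -> S i j = 0) -> (forall i, 0 < S i i) ->
  S \in unitmx.
Proof.
move=> hd hp.
have -> : S = diag_mx (\row_i S i i).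
  apply/matrixP => i j; rewrite !mxE; case: eqVneq => [->|ij]; first by rewrite mulr1n.
  by rewrite mulr0n hd.
rewrite unitmxE det_diag unitfE; apply/prodf_neq0 => i _; rewrite mxE.
by rewrite gt_eqF.
Qed.

Theorem theorem3p4 (R : realType) (m n s : nat) (hmn : (m <= n)%N)
  (A : 'M[R]_(m, n)) (lambda : R) (hlam : 0 < lambda)
  (U Sigma : 'M[R]_m) (V1 : 'M[R]_(n, m)) (V2 : 'M[R]_m)
  (hU : U^T *m U = 1%:M)
  (hSdiag : forall i j : 'I_m, i != j -> Sigma i j = 0)
  (hSpos : forall i : 'I_m, 0 < Sigma i i)
  (hSord : forall i j : 'I_m, (i <= j)%N -> Sigma j j <= Sigma i i)
  (hV : (col_mx V1 V2)^T *m col_mx V1 V2 = 1%:M)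
  (hSVD : row_mx A ((Num.sqrt lambda)%:M : 'M[R]_m)
          = U *m Sigma *m (col_mx V1 V2)^T)
  (X : 'M[R]_(n, s)) (eps : R) (heps0 : 0 < eps) (heps1 : eps < 1)
  (hX : spec_norm (V1^T *m X *m X^T *m V1 - V1^T *m V1) <= eps)
  (Rm : 'M[R]_m)
  (hR : Rm^T *m Rm = (A *m X) *m (A *m X)^T + lambda%:M) :
  kappa2 ((invmx Rm)^T *m row_mx A ((Num.sqrt lambda)%:M : 'M[R]_m))
    <= Num.sqrt ((1 + eps) / (1 - eps)).
Proof.
have [hA hL] : A = U *m Sigma *m V1^T /\ (Num.sqrt lambda)%:M = U *m Sigma *m V2^T.
  by move: hSVD; rewrite tr_col_mx mul_mx_row => /eq_row_mx.
have hV' : V1^T *m V1 + V2^T *m V2 = 1%:M by rewrite -hV tr_col_mx mul_row_col.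
set D := row_mx A _ in hSVD *.
set Vc := col_mx V1 V2 in hV hSVD.
set E := V1^T *m X *m X^T *m V1 - V1^T *m V1 in hX.
set K := U *m Sigma in hA hL hSVD.
have Uu : U \in unitmx by case: (mulmx1_unit hU).
have Ku : K \in unitmx by rewrite unitmx_mul Uu sigma_unit.
have KTu : K^T \in unitmx by rewrite unitmx_tr.
have hDD : D *m D^T = K *m K^T.
  by rewrite hSVD trmx_mul trmxK -!mulmxA (mulmxA Vc^T) hV mul1mx.
have ET : E^T = E by rewrite /E linearB /= !trmx_mul !trmxK !mulmxA.
have h1E : 1%:M + E = V1^T *m X *m X^T *m V1 + V2^T *m V2.
  by rewrite -hV' /E addrC addrA subrK.
have hG : Rm^T *m Rm = K *m (1%:M + E) *m K^T.
  have hl : lambda%:M = K *m V2^T *m (K *m V2^T)^T.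
    by rewrite -hL tr_scalar_mx -scalar_mxM -expr2 sqr_sqrtr // ltW.
  rewrite hR hl hA h1E mulmxDr mulmxDl !trmx_mul !trmxK !mulmxA //.
have hEb : forall (w : 'rV_m) b, w != 0 -> w *m E = b *: w -> `|b| <= eps.
  by move=> w b w0 hw; apply: (eig_bound ET _ w0 hw); move: hX; rewrite /spec_norm /sigma_max.
have Gu : Rm^T *m Rm \in unitmx.
  rewrite hG unitmx_mul KTu andbT (unitmx_mul K) Ku /=.
  rewrite -row_free_unit -kermx_eq0; apply: contraT => hk.
  have : eigenvalue E (-1).
    rewrite /eigenvalue /eigenspace /=.
    have -> : (-1)%:M = - (1%:M : 'M[R]_m) by apply/matrixP => i j; rewrite !mxE mulNrn.
    by rewrite opprK addrC.
  case/eigenvalueP => w hw w0.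
  have := hEb w _ w0 hw; rewrite normrN normr1 => h; lra.
have Rmu : Rm \in unitmx by move: Gu; rewrite unitmx_mul => /andP[].
have hN : K^T *m invmx Rm *m (invmx Rm)^T *m K *m (1%:M + E) = 1%:M.
  apply: (can_inj (mulmxK KTu)); rewrite /= mul1mx.
  have H : K^T *m invmx Rm *m (invmx Rm)^T *m (K *m (1%:M + E) *m K^T) = K^T.
    rewrite -hG !mulmxA -(mulmxA _ (invmx Rm)^T) -trmx_mul mulmxV // trmx1 mulmx1.
    by rewrite -mulmxA mulVmx // mulmx1.
  by move: H; rewrite !mulmxA.
have key : forall a, eigenvalue ((invmx Rm)^T *m D *m ((invmx Rm)^T *m D)^T) a ->
    (1 + eps)^-1 <= a <= (1 - eps)^-1.
  move=> a /eigenvalueP [v hv v0].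
  set w := v *m ((invmx Rm)^T *m K).
  have w0 : w != 0.
    by rewrite /w mulmx_free_eq0 // row_free_unit unitmx_mul unitmx_tr unitmx_inv Rmu Ku.
  have e1 : (invmx Rm)^T *m D *m ((invmx Rm)^T *m D)^T
      = (invmx Rm)^T *m (K *m K^T) *m invmx Rm.
    by rewrite -hDD trmx_mul trmxK !mulmxA.
  have hw : w *m (K^T *m invmx Rm *m (invmx Rm)^T *m K) = a *: w.
    by rewrite /w scalemxAl -hv e1 !mulmxA.
  have hw2 : w = a *: (w + w *m E).
    have := congr1 (mulmx^~ (1%:M + E)) hw; rewrite /= -(mulmxA w) hN mulmx1 => h.
    by rewrite {1}h -scalemxAl mulmxDr mulmx1.
  have a0 : a != 0.
    by apply/eqP => a0; move: w0; rewrite hw2 a0 scale0r eqxx.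
  have hwE : w *m E = (a^-1 - 1) *: w.
    rewrite scalerBl scale1r.
    have := congr1 (fun x => a^-1 *: x) hw2; rewrite /= scalerA mulVf // scale1r => ->.
    by rewrite addrC addKr.
  have := hEb _ _ w0 hwE; rewrite ler_norml => /andP[h1 h2].
  have c0 : 0 < a^-1 by lra.
  rewrite -[a]invrK !lef_pV2 ?posrE //; last 2 first.
  - lra.
  - lra.
  apply/andP; split; lra.
rewrite /kappa2 /sigma_max /sigma_min.
set S := singvals _.
have hS : forall x, S x ->
    Num.sqrt ((1 + eps)^-1) <= x <= Num.sqrt ((1 - eps)^-1).
  move=> _ [a /key /andP[h1 h2] <-].
  by apply/andP; split; apply: ler_wsqrtr.
have [Sn|Se] := pselect (S !=set0); last first.
  have -> : S = set0.
    by apply/seteqP; split => x // Sx; apply: Se; exists x.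
  by rewrite sup0 mul0r sqrtr_ge0.
have Hsup : sup S <= Num.sqrt ((1 - eps)^-1).
  by apply: ge_sup Sn _ => x /hS /andP[].
have Hinf : Num.sqrt ((1 + eps)^-1) <= inf S.
  by apply: lb_le_inf Sn _ => x /hS /andP[].
have lo0 : 0 < Num.sqrt ((1 + eps)^-1) by rewrite sqrtr_gt0 invr_gt0; lra.
have inf0 : 0 < inf S by apply: lt_le_trans Hinf.
apply: le_trans (_ : Num.sqrt ((1 - eps)^-1) / Num.sqrt ((1 + eps)^-1) <= _).
  apply: le_trans (ler_wpM2r _ Hsup) _; first by rewrite invr_ge0 ltW.
  by rewrite ler_wpM2l ?sqrtr_ge0 // lef_pV2 ?posrE.
rewrite (sqrtrV (x := 1 + eps)); last lra.
rewrite invrK -sqrtrM; last by rewrite invr_ge0; lra.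
by rewrite mulrC lexx.
Qed.
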